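(* Let $X,X_1,X_2,\dots$ be real random variables on a probability space $(\Omega,\mathcal{F},P)$. Suppose that for every $\varepsilon>0$, $\sum_{n=1}^\infty P(|X_n-X|\ge\varepsilon)<\infty$, and that for some $\varepsilon>0$, $\sum_{n=1}^\infty E\big[|X_n-X|\,I_{\{|X_n-X|<\varepsilon\}}\big]<\infty$. Then for every bounded Lipschitz continuous function $f:\mathbb{R}\to\mathbb{R}$, $\sum_{n=1}^\infty E[|f(X_n)-f(X)|]<\infty$. Consequently, for every bounded Lipschitz continuous function $f:\mathbb{R}\to\mathbb{R}$, $\sum_{n=1}^\infty |E[f(X_n)-f(X)]|<\infty$.
   Context: $I_A$ denotes the indicator function of the event $A$. *)

(* Defs.v *)
From HB Require Import structures.
From mathcomp Require Import all_boot all_order all_algebra.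
From mathcomp Require Import all_classical all_reals all_analysis.
Set Implicit Arguments. Unset Strict Implicit. Unset Printing Implicit Defensive.
Import Order.TTheory GRing.Theory Num.Theory.
Local Open Scope ring_scope.

Definition lipschitz_fun (R : realType) (f : R -> R) : Prop :=
  exists L : R, forall x y, `|f x - f y| <= L * `|x - y|.

(* Main.v *)
Require Import Defs.
From HB Require Import structures.
From mathcomp Require Import all_boot all_order all_algebra.
From mathcomp Require Import all_classical all_reals all_analysis.
From mathcomp Require Import measurable_realfun.
Import Order.TTheory GRing.Theory Num.Theory.
Local Open Scope classical_set_scope.
Local Open Scope ring_scope.

Lemma mset_lt d (T : measurableType d) (R : realType) (h : T -> R) e :
  measurable_fun setT h -> measurable [set w | h w < e].
Proof.
move=> mh; have := mh measurableT _ (measurable_itv `]-oo, e[).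
rewrite setTI; congr measurable; apply/seteqP; split => w /=; by rewrite in_itv /=.
Qed.

Lemma mset_ge d (T : measurableType d) (R : realType) (h : T -> R) e :
  measurable_fun setT h -> measurable [set w | e <= h w].
Proof.
move=> mh; have := mh measurableT _ (measurable_itv `[e, +oo[).
rewrite setTI; congr measurable; apply/seteqP; split => w /=; by rewrite in_itv /= andbT.
Qed.

Lemma getbound (R : realType) (f : R -> R) : bounded_fun f ->
  exists M : R, 0 <= M /\ forall x, `|f x| <= M.
Proof.
move=> [M [_ HM]]; exists (`|M| + 1); split; first by rewrite addr_ge0.
move=> x; have := HM (`|M| + 1).
have H : M < `|M| + 1 by rewrite (le_lt_trans (ler_norm M)) // ltrDl.
by move=> /(_ H x I).
Qed.

Lemma lip_cont (R : realType) (f : R -> R) (L : R) :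
  (forall x y, `|f x - f y| <= L * `|x - y|) -> measurable_fun setT f.
Proof.
move=> HL; apply: continuous_measurable_fun => x.
apply/cvgrPdist_le => e e0.
have Lp : 0 < `|L| + 1 by rewrite ltr_wpDl.
apply/nbhs_normP; exists (e / (`|L| + 1)); first by rewrite /= divr_gt0.
move=> z /= hz; rewrite (le_trans (HL x z)) //.
rewrite (le_trans (ler_wpM2r (normr_ge0 _) (ler_norm L))) //.
rewrite (le_trans (ler_wpM2r (normr_ge0 _) (_ : `|L| <= `|L|+1))) ?lerDl //.
by rewrite -ler_pdivlMl // ltW // mulrC.
Qed.

Lemma ind_ge0 (T : Type) (R : realType) (A : set T) (w : T) : (0 : R) <= \1_A w.
Proof. by rewrite indicE; case: (w \in A). Qed.

Lemma bound_n d (T : measurableType d) (R : realType) (P : probability T R)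
  (X Y : {RV P >-> R}) (f : R -> R) (M L eps : R) :
  0 <= M -> (forall x, `|f x| <= M) ->
  (forall x y, `|f x - f y| <= L * `|x - y|) -> 0 < eps ->
  ('E_P[fun w => `|f (Y w) - f (X w)|%R] <=
   `|L|%:E * 'E_P[fun w => (`|Y w - X w| * \1_[set w' | `|Y w' - X w'| < eps] w)%R]
   + (2 * M)%:E * P [set w | (eps <= `|Y w - X w|)%R])%E.
Proof.
move=> M0 HM HL e0.
set h := fun w => `|Y w - X w|.
have mX : measurable_fun setT X by exact: measurable_funP.
have mY : measurable_fun setT Y by exact: measurable_funP.
have mh : measurable_fun setT h.
  by apply: measurableT_comp; [exact: normr_measurable|exact: measurable_funB].
have mf : measurable_fun setT f := @lip_cont _ f L HL.
have mA := @mset_lt _ _ _ h eps mh.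
have mB := @mset_ge _ _ _ h eps mh.
rewrite !unlock.
set a := fun w => (h w * \1_[set w' | h w' < eps] w)%R.
have ma : measurable_fun setT a by apply: measurable_funM => //; exact: measurable_indic.
have a0 : forall w, (0 <= a w)%R.
  by move=> w; apply: mulr_ge0; [exact: normr_ge0|exact: ind_ge0].
have E1 : (\int[P]_w (`|L| * a w)%:E = `|L|%:E * \int[P]_w (a w)%:E)%E.
  rewrite -ge0_integralZl_EFin //; last 2 first.
  - by move=> w _; rewrite lee_fin.
  - by apply/measurable_EFinP.
have E2 : (\int[P]_w ((2 * M) * \1_[set w | (eps <= h w)%R] w)%:E
      = (2 * M)%:E * P [set w | (eps <= h w)%R])%E.
  rewrite -[in RHS](setIT [set w | (eps <= h w)%R]) -integral_indic //.
  rewrite -ge0_integralZl_EFin //.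
  all: try (by move=> w _; rewrite lee_fin ind_ge0).
  all: try (by apply/measurable_EFinP; exact: measurable_indic).
  all: try (by rewrite mulr_ge0).
have E3 : (\int[P]_w ((`|L| * a w)%:E + ((2 * M) * \1_[set w | (eps <= h w)%R] w)%:E)
   = \int[P]_w (`|L| * a w)%:E + \int[P]_w ((2 * M) * \1_[set w | (eps <= h w)%R] w)%:E)%E.
  rewrite ge0_integralD //.
  - by move=> w _; rewrite lee_fin mulr_ge0.
  - by apply/measurable_EFinP; apply: measurable_funM => //; exact: measurable_cst.
  - by move=> w _; rewrite lee_fin mulr_ge0 ?ind_ge0 // mulr_ge0.
  - apply/measurable_EFinP; apply: measurable_funM; first exact: measurable_cst.
    exact: measurable_indic.
rewrite -E1 -E2 -E3.
apply: ge0_le_integral => //.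
- apply/measurable_EFinP; apply: measurableT_comp; first exact: normr_measurable.
  by apply: measurable_funB; apply: measurableT_comp.
- apply: emeasurable_funD; apply/measurable_EFinP; apply: measurable_funM => //;
  try exact: measurable_cst; exact: measurable_indic.
move=> w _; rewrite -EFinD lee_fin /a !indicE.
case: (pselect (h w < eps)) => hw.
- have -> : (w \in [set w' | h w' < eps]) = true by apply/mem_set.
  have -> : (w \in [set w' | (eps <= h w')%R]) = false.
    by apply/memNset => /=; rewrite leNgt hw.
  by rewrite mulr0 addr0 mulr1 (le_trans (HL _ _)) // ler_wpM2r // ler_norm.
- have -> : (w \in [set w' | h w' < eps]) = false by rewrite memNset.
  have -> : (w \in [set w' | (eps <= h w')%R]) = true.
    by apply/mem_set => /=; rewrite leNgt; apply/negP.
  rewrite mulr0 mulr0 add0r mulr1.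
  rewrite (le_trans (ler_normB _ _)) // mulr2n mulrDl mul1r lerD //.
Qed.

Theorem proposition3p3 (d : measure_display) (T : measurableType d)
  (R : realType) (P : probability T R)
  (X : {RV P >-> R}) (Xn : nat -> {RV P >-> R}) :
  (forall eps : R, 0 < eps ->
     (\sum_(1 <= n <oo) P [set w | (eps <= `|Xn n w - X w|)%R] < +oo)%E) ->
  (exists eps : R, 0 < eps /\
     (\sum_(1 <= n <oo)
        'E_P[fun w => (`|Xn n w - X w| * \1_[set w' | `|Xn n w' - X w'| < eps] w)%R]
        < +oo)%E) ->
  (forall f : R -> R, bounded_fun f -> lipschitz_fun f ->
     (\sum_(1 <= n <oo) 'E_P[fun w => `|f (Xn n w) - f (X w)|%R] < +oo)%E)
  /\
  (forall f : R -> R, bounded_fun f -> lipschitz_fun f ->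
     (\sum_(1 <= n <oo) `|'E_P[fun w => (f (Xn n w) - f (X w))%R]| < +oo)%E).
Proof.
move=> H1 [eps [e0 H2]].
have part1 : forall f : R -> R, bounded_fun f -> lipschitz_fun f ->
     (\sum_(1 <= n <oo) 'E_P[fun w => `|f (Xn n w) - f (X w)|%R] < +oo)%E.
  move=> f bf [L HL]; have [M [M0 HM]] := @getbound _ f bf.
  apply: le_lt_trans; first apply: (lee_nneseries (v := fun n =>
    (`|L|%:E * 'E_P[fun w => (`|Xn n w - X w| * \1_[set w' | `|Xn n w' - X w'| < eps] w)%R]
     + (2 * M)%:E * P [set w | (eps <= `|Xn n w - X w|)%R])%E)).
  - by move=> i _ _; apply: expectation_ge0 => w.
  - by move=> n _; exact: bound_n.
  rewrite nneseriesD; last 2 first.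
  - move=> i _ _; apply: mule_ge0 => //; apply: expectation_ge0 => w.
    by apply: mulr_ge0; [exact: normr_ge0|exact: ind_ge0].
  - by move=> i _ _; apply: mule_ge0 => //; rewrite lee_fin mulr_ge0.
  rewrite !nneseriesZl; last 2 first.
  - by [].
  - move=> i _; apply: expectation_ge0 => w.
    by apply: mulr_ge0; [exact: normr_ge0|exact: ind_ge0].
  apply: lte_add_pinfty; apply: lte_mul_pinfty => //.
  - by rewrite lee_fin mulr_ge0.
  - exact: H1.
split => // f bf lf.
apply: le_lt_trans (part1 f bf lf).
apply: lee_nneseries => // n _.
have [L HL] := lf.
have mf : measurable_fun setT f := @lip_cont _ f L HL.
have mX : measurable_fun setT X by exact: measurable_funP.
have mY : measurable_fun setT (Xn n) by exact: measurable_funP.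
rewrite !unlock; apply: le_abse_integral => //.
by apply/measurable_EFinP; apply: measurable_funB; apply: measurableT_comp.
Qed.
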